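(* In the asymptotic framework described in the context, if $F_{\Sigma_n}(u)\to F_\Sigma(u)$ almost surely for almost every $u>0$, then $\lim_{n,d\to\infty}\frac{d_\lambda^n}{n}$ exists for every $\lambda>0$.
   Context: Asymptotic framework: a sequence of positive semidefinite matrices $\Sigma_n\in\mathbb{R}^{d\times d}$ indexed by $n$, with $d=d(n)$, $n,d\to\infty$, $d/n\to y\in[0,1)$. $F_{\Sigma_n}(u)=d^{-1}\sum_{i=1}^d\mathbb{I}(\lambda_i(\Sigma_n)\le u)$ is the empirical spectral distribution and $F_\Sigma$ a limiting distribution function. $d_\lambda^n=\mathrm{tr}(\Sigma_n(\Sigma_n+\lambda I)^{-1})$. *)

(* Defs.v *)
From HB Require Import structures.
From mathcomp Require Import all_boot all_order all_algebra.
From mathcomp Require Import all_classical all_reals all_analysis.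
From mathcomp Require Import polyrcf.
Set Implicit Arguments. Unset Strict Implicit. Unset Printing Implicit Defensive.
Import Order.TTheory GRing.Theory Num.Theory.
Import numFieldNormedType.Exports.
Local Open Scope classical_set_scope.
Local Open Scope ring_scope.

Definition psd (R : realType) (d : nat) (A : 'M[R]_d) : Prop :=
  A^T = A /\ forall x : 'cV[R]_d, 0 <= (x^T *m A *m x) 0 0.

(* Empirical spectral distribution: F_A(u) = d^{-1} #{i : lambda_i(A) <= u},
   eigenvalues counted with (algebraic) multiplicity, i.e. as real roots of
   the characteristic polynomial with multiplicity. *)
Definition esd (R : realType) (d : nat) (A : 'M[R]_d) (u : R) : R :=
  (\sum_(x <- rootsR (char_poly A) | x <= u) (mup x (char_poly A))%:R) / d%:R.

Definition dlam (R : realType) (d : nat) (A : 'M[R]_d) (lam : R) : R :=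
  \tr (A *m invmx (A + lam%:M)).

Definition distribution_function (R : realType) (F : R -> R) : Prop :=
  {homo F : x y / x <= y} /\
  (forall a, F @ a^'+ --> F a) /\
  (F x @[x --> -oo] --> (0:R)) /\ (F x @[x --> +oo] --> (1:R)).

(* Main.v *)
Require Import Defs.
From HB Require Import structures.
From mathcomp Require Import all_boot all_order all_algebra.
From mathcomp Require Import all_classical all_reals all_analysis.
From mathcomp Require Import polyrcf.
From mathcomp Require Import complex spectral sesquilinear ring lra.
Import Order.TTheory GRing.Theory Num.Theory.
Import numFieldNormedType.Exports.
Local Open Scope classical_set_scope.
Local Open Scope ring_scope.
Set Implicit Arguments. Unset Strict Implicit. Unset Printing Implicit Defensive.

Lemma char_poly_conj (F : fieldType) n (P B : 'M[F]_n) : P \in unitmx ->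
  char_poly (invmx P *m B *m P) = char_poly B.
Proof.
move=> Pu; rewrite /char_poly /char_poly_mx.
set Q := map_mx polyC P; set Qi := map_mx polyC (invmx P).
have QiQ : Qi *m Q = 1%:M by rewrite -map_mxM mulVmx // map_mx1.
have -> : map_mx polyC (invmx P *m B *m P) = Qi *m map_mx polyC B *m Q by rewrite !map_mxM.
have -> : 'X%:M - Qi *m map_mx polyC B *m Q = Qi *m ('X%:M - map_mx polyC B) *m Q.
  rewrite mulmxBr mulmxBl; congr (_ - _).
  by rewrite scalar_mxC -mulmxA QiQ mulmx1.
rewrite (det_mulmx (Qi *m _)) det_mulmx mulrC mulrA -det_mulmx.
have -> : Q *m Qi = 1%:M.
  by rewrite -map_mxM mulmxV // map_mx1.
by rewrite det1 mul1r.
Qed.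

Lemma sum_count_mem (T : eqType) (r s : seq T) (P : pred T) : uniq r -> {subset s <= r} ->
  (\sum_(x <- r | P x) count_mem x s = count P s)%N.
Proof.
move=> ur; elim: s => [|y s IH] sub /=; first by rewrite big1 // => x _.
rewrite big_split /= IH; last by move=> z zs; apply: sub; rewrite inE zs orbT.
congr (_ + _)%N.
have yr : y \in r by apply: sub; rewrite inE eqxx.
case Py: (P y) => /=.
  rewrite -big_filter (bigD1_seq y) ?filter_uniq ?mem_filter ?Py //= eqxx big1 ?addn0 //.
  by move=> i iy; rewrite eq_sym (negPf iy).
rewrite big1 // => i Pi; case: eqP => // yi; by rewrite yi Pi in Py.
Qed.

Lemma inv_of_right (F : fieldType) n (B W : 'M[F]_n) : B *m W = 1%:M -> invmx B = W.
Proof.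
move=> BW; have [Bu _] := mulmx1_unit BW.
have -> : W = invmx B *m (B *m W) by rewrite mulmxA (mulVmx Bu) mul1mx.
by rewrite BW mulmx1.
Qed.

Section Spec.
Variable R : rcfType.
Local Notation C := (complex R).
Local Notation toC := (real_complex R).
Local Open Scope complex_scope.

Lemma real_ReC (z : C) : z \is Num.real -> z = (complex.Re z)%:C.
Proof.
case: z => a b; rewrite realE !lecE /= => /orP[/andP[/eqP H _]|/andP[/eqP H _]].
  by rewrite H.
by rewrite -H.
Qed.

Lemma toC_real (x : R) : toC x \is Num.real.
Proof. by rewrite realE !ler0c lecR; case: (lerP 0 x) => // /ltW ->; rewrite orbT. Qed.

Lemma diag_conj_mul n (P : 'M[C]_n) (a b : 'rV[C]_n) : P \in unitmx ->
  (invmx P *m diag_mx a *m P) *m (invmx P *m diag_mx b *m P) =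
  invmx P *m diag_mx (\row_j (a 0 j * b 0 j)) *m P.
Proof.
move=> Pu; rewrite -!mulmxA; congr (_ *m _).
by rewrite [P *m _]mulmxA mulmxV // mul1mx mulmxA mulmx_diag.
Qed.

Lemma real_eig_nonneg n (A : 'M[R]_n) x :
  (forall v : 'cV_n, 0 <= (v^T *m A *m v) 0 0) -> root (char_poly A) x -> 0 <= x.
Proof.
move=> psdA; rewrite -eigenvalue_root_char => /eigenvalueP [v vA vn0].
have := psdA v^T; rewrite trmxK vA -scalemxAl mxE.
set S := (v *m v^T) 0 0.
have SE : S = \sum_j v 0 j ^+ 2.
  by rewrite /S mxE; apply: eq_bigr => j _; rewrite mxE expr2.
have S0 : 0 < S.
  rewrite lt_def SE sumr_ge0 ?andbT; last by move=> j _; rewrite sqr_ge0.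
  apply/negP => /eqP /psumr_eq0P H; apply/negP: vn0; rewrite negbK.
  apply/eqP/rowP => j; rewrite mxE; apply/eqP; rewrite -sqrf_eq0; apply/eqP.
  by rewrite H // => i _; rewrite sqr_ge0.
by rewrite pmulr_lge0.
Qed.

Lemma spec_decomp n (A : 'M[R]_n) : A^T = A ->
  (forall v : 'cV_n, 0 <= (v^T *m A *m v) 0 0) ->
  exists s : seq R, [/\ size s = n, char_poly A = \prod_(x <- s) ('X - x%:P),
    (forall x, x \in s -> 0 <= x) &
    forall lam, 0 < lam -> \tr (A *m invmx (A + lam%:M)) = \sum_(x <- s) x / (x + lam)].
Proof.
move=> symA psdA.
pose AC := map_mx toC A.
have herm : AC \is hermsymmx.
  apply: realsym_hermsym.
    apply/is_hermitianmxP; rewrite expr0 scale1r.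
    by rewrite map_mx_id // /AC map_trmx symA.
  by apply/mxOverP => i j; rewrite mxE toC_real.
have /orthomx_spectralP eqA := hermitian_normalmx herm.
set P := spectralmx AC in eqA; set D := spectral_diag AC in eqA.
have Dreal := hermitian_spectral_diag_real herm; rewrite -/D in Dreal.
have Pu : P \in unitmx by apply: spectral_unit.
pose r i := complex.Re (D 0 i).
have Dr i : D 0 i = toC (r i) by apply: real_ReC; apply: (mxOverP Dreal).
pose s := [seq r i | i <- enum 'I_n].
have chA : char_poly A = \prod_(x <- s) ('X - x%:P).
  apply: (@map_poly_inj _ _ toC).
  rewrite map_char_poly -/AC eqA char_poly_conj // char_poly_trig ?diag_mx_is_trig //.
  rewrite map_prod_XsubC big_map big_enum /=; apply: eq_bigr => i _.
  by rewrite mxE eqxx mulr1n Dr.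
have s0 x : x \in s -> 0 <= x.
  by move=> xs; apply: (real_eig_nonneg psdA); rewrite chA root_prod_XsubC.
exists s; split => //; first by rewrite size_map size_enum_ord.
move=> lam lam0.
apply: complexI; rewrite -trace_map_mx map_mxM map_invmx map_mxD map_scalar_mx -/AC.
set l := toC lam.
have Dl0 j : D 0 j + l != 0.
  have rj0 : 0 <= r j by apply: s0; apply: map_f; rewrite mem_enum.
  by rewrite Dr -rmorphD /= fmorph_eq0 gt_eqF // ltr_wpDl.
pose Bm := invmx P *m diag_mx (\row_j (D 0 j + l)) *m P.
pose W := invmx P *m diag_mx (\row_j (D 0 j + l)^-1) *m P.
have eqB : AC + l%:M = Bm.
  rewrite /Bm; have -> : diag_mx (\row_j (D 0 j + l)) = diag_mx D + l%:M.
    by apply/matrixP => i j; rewrite !mxE; case: (i == j); rewrite ?mulr1n ?mulr0n ?addr0.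
  rewrite mulmxDr mulmxDl -eqA; congr (_ + _).
  by rewrite scalar_mxC -mulmxA mulVmx // mulmx1.
have BW : Bm *m W = 1%:M.
  rewrite /Bm /W (diag_conj_mul _ _ Pu).
  rewrite (_ : diag_mx _ = 1%:M); first by rewrite mulmx1 mulVmx.
  apply/matrixP => i k; rewrite !mxE; case: (i == k); rewrite ?mulr1n ?mulr0n //.
  by rewrite mulfV.
have invB : invmx Bm = W by apply: inv_of_right.
rewrite eqB invB {1}eqA /W (diag_conj_mul _ _ Pu) mxtrace_mulC mulKVmx // mxtrace_diag.
rewrite rmorph_sum big_map big_enum /=; apply: eq_bigr => j _.
by rewrite !mxE Dr rmorphM fmorphV rmorphD.
Qed.
End Spec.

Lemma esd_count (R : rcfType) (s : seq R) (u : R) :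
  \sum_(x <- rootsR (\prod_(y <- s) ('X - y%:P)) | x <= u)
     (mup x (\prod_(y <- s) ('X - y%:P)))%:R = (count (fun x => x <= u) s)%:R :> R.
Proof.
rewrite (eq_bigr (fun x => (count_mem x s)%:R)); last first.
    by move=> x _; rewrite mu_prod_XsubC.
rewrite -(@natr_sum R _ _ (fun i => i <= u) (fun i => count_mem i s)).
rewrite sum_count_mem //; first exact: uniq_roots.
move=> x xs.
have pn0 : \prod_(y <- s) ('X - y%:P) != 0 by rewrite monic_neq0 // monic_prod_XsubC.
have := roots_on_rootsR pn0 x; rewrite root_prod_XsubC xs andbT => <-.
by rewrite in_itv.
Qed.

Lemma count_sumR (R : pzSemiRingType) (T : Type) (a : pred T) (s : seq T) :
  (count a s)%:R = \sum_(x <- s) (a x)%:R :> R.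
Proof. by elim: s => [|y s IH]; rewrite ?big_nil ?big_cons //= natrD IH. Qed.

Lemma sum_const_seq (R : pzSemiRingType) (T : Type) (s : seq T) (e : R) :
  \sum_(x <- s) e = e * (size s)%:R.
Proof.
elim: s => [|y s IH]; first by rewrite big_nil mulr0.
by rewrite big_cons IH /= -addn1 natrD mulrDr mulr1 addrC.
Qed.

Lemma approx_cvg (R : realType) (a : nat -> R) :
  (forall e : R, 0 < e -> exists b : nat -> R, cvg (b n @[n --> \oo]) /\ forall n, `|a n - b n| <= e) ->
  cvg (a n @[n --> \oo]).
Proof.
move=> H; apply: cauchy_cvg; apply: cauchy_exP => e e0.
have e30 : 0 < e / 3 by rewrite divr_gt0.
have [b [cb ab]] := H _ e30.
exists (lim (b n @[n --> \oo])).
have := cb; move/cvgrPdist_lt => /(_ _ e30) Hb.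
rewrite /= /nbhs /=; near=> n.
rewrite /ball /=.
have := ab n; have : `|lim (b n @[n --> \oo]) - b n| < e / 3 by near: n.
move=> h1 h2.
rewrite (le_lt_trans (ler_distD (b n) _ _)) //.
rewrite distrC in h2; lra.
Unshelve. all: by end_near.
Qed.

Lemma cvg_sum_ord (R : realType) (K : nat) (F : nat -> nat -> R) :
  (forall j, cvg (F n j @[n --> \oo])) -> cvg ((\sum_(j < K) F n j) @[n --> \oo]).
Proof.
move=> hF; elim: K => [|K IH].
  under eq_fun do rewrite big_ord0. exact: is_cvg_cst.
under eq_fun do rewrite big_ord_recr /=.
exact: is_cvgD IH (hF K).
Qed.

Section Core.
Variables (R : realType) (f : R -> R) (L : R).
Hypothesis L0 : 0 < L.
Hypothesis lip : forall x y, 0 <= x -> 0 <= y -> `|f x - f y| <= L * `|x - y|.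
Variable v : nat -> nat -> R.
Hypothesis hv : forall m k, (k%:R / m.+1%:R < v m k) /\ (v m k < k.+1%:R / m.+1%:R).

Lemma v_mono m i j : (i <= j)%N -> v m i <= v m j.
Proof.
rewrite leq_eqVlt => /orP[/eqP -> //|ij].
have [_ h1] := hv m i; have [h2 _] := hv m j.
apply/ltW/(lt_trans h1)/(le_lt_trans _ h2).
by rewrite ler_pM2r ?invr_gt0 ?ltr0n // ler_nat.
Qed.

Definition lo m (j : nat) := if j is j'.+1 then v m j' else -1.
Definition bin m j (x : R) := (lo m j < x) && (x <= v m j).

Lemma count_bin m j (s : seq R) :
  (count (bin m j) s)%:R = (count (fun x => x <= v m j) s)%:R - (count (fun x => x <= lo m j) s)%:R :> R.
Proof.
have lov : lo m j <= v m j.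
  case: j => [|j] /=; last exact: v_mono.
  have [h _] := hv m 0; apply: ltW; apply: lt_trans h; rewrite mul0r; lra.
elim: s => [|y s IH]; first by rewrite /= subrr.
rewrite /= !natrD IH /bin.
case: (leP y (lo m j)) => hy /=.
  by rewrite (le_trans hy lov) /=; lra.
lra.
Qed.


Lemma v_ge0 m k : 0 <= v m k.
Proof.
have [h _] := hv m k; apply: ltW; apply: le_lt_trans h.
by rewrite divr_ge0.
Qed.

Lemma pointwise m K x e : 0 <= x -> 2 * L / m.+1%:R <= e ->
  (forall y, v m K <= y -> `|f y| <= e) ->
  `|f x - \sum_(j < K.+1) f (v m j) * (bin m j x)%:R| <= e.
Proof.
move=> x0 he ht.
set t := m.+1%:R^-1 : R.
have t0 : 0 < t by rewrite invr_gt0 ltr0n.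
case: (leP x (v m K)) => hx; last first.
  rewrite big1 ?subr0; first exact/ht/ltW.
  move=> k _; rewrite /bin.
  have : ~~ (x <= v m k).
    by rewrite -ltNge; apply: le_lt_trans hx; apply: v_mono; rewrite -ltnS.
  by move/negbTE => ->; rewrite andbF mulr0.
have ex : exists j, (j <= K)%N && (x <= v m j) by exists K; rewrite leqnn hx.
case: (ex_minnP ex) => j /andP[jK xj] jmin.
have jK1 : (j < K.+1)%N by [].
rewrite (bigD1 (Ordinal jK1)) //= big1 ?addr0; last first.
  move=> k kj; rewrite /bin.
  have kj2 : (k : nat) != j by apply: contra kj => /eqP kj3; apply/eqP/val_inj.
  case: (ltngtP k j) => [kj'|jk|e']; last by rewrite e' eqxx in kj2.
    have : ~~ (x <= v m k).
      apply/negP => xk; have := jmin k; rewrite (leq_trans (ltnW kj') jK) xk => /(_ isT).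
      by rewrite leqNgt kj'.
    by move/negbTE => ->; rewrite andbF mulr0.
  case: (k : nat) jk => [//|k'] jk /=.
  have : ~~ (v m k' < x).
    by rewrite -leNgt; apply: le_trans xj _; apply: v_mono.
  by move/negbTE => ->; rewrite mulr0.
have binj : bin m j x.
  rewrite /bin xj andbT; case: j jK xj jmin {jK1} => [|j'] jK xj jmin /=; first lra.
  rewrite ltNge; apply/negP => h; have := jmin j'; rewrite (ltnW jK) h => /(_ isT).
  by rewrite ltnn.
rewrite binj mulr1.
apply: le_trans (lip x0 (v_ge0 m j)) _.
have dist : `|x - v m j| <= 2%:R * t.
  rewrite ler0_norm ?subr_le0 // opprB.
  case: j jK xj jmin binj {jK1} => [|j'] jK xj jmin binj.
    have [_ h] := hv m 0; rewrite -/t in h; lra.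
  have [_ h1] := hv m j'.+1; have [h2 _] := hv m j'; rewrite -/t in h1 h2.
  move: binj; rewrite /bin /= => /andP[h3 _].
  have e1 : j'.+2%:R = j'%:R + 2%:R :> R by rewrite -addn2 natrD.
  rewrite e1 in h1; nra.
apply: le_trans he; apply: le_trans (ler_wpM2l (ltW L0) dist) _.
by rewrite /t mulrA [L * _]mulrC.
Qed.


Lemma mean_bound m K e (s : seq R) : (forall x, x \in s -> 0 <= x) ->
  2 * L / m.+1%:R <= e -> (forall y, v m K <= y -> `|f y| <= e) ->
  `|(\sum_(x <- s) f x) / (size s)%:R -
     \sum_(j < K.+1) f (v m j) * ((count (bin m j) s)%:R / (size s)%:R)| <= e.
Proof.
move=> s0 he ht.
have e0 : 0 <= e := le_trans (normr_ge0 _) (ht _ (lexx _)).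
case: s s0 => [|y s'] s0.
  rewrite big_nil /= ?mulr0n mul0r big1 ?subr0 ?normr0 // => j _; by rewrite mulr0.
set s := y :: s'.
have -> : \sum_(j < K.+1) f (v m j) * ((count (bin m j) s)%:R / (size s)%:R) =
    (\sum_(x <- s) \sum_(j < K.+1) f (v m j) * (bin m j x)%:R) / (size s)%:R.
  rewrite exchange_big mulr_suml; apply: eq_bigr => j _.
  by rewrite count_sumR -big_distrr mulrA.
have Npos : 0 < (size s)%:R :> R by rewrite ltr0n.
rewrite -mulrBl -sumrB normrM [`|_^-1|]ger0_norm ?invr_ge0 ?ler0n // ler_pdivrMr //.
apply: le_trans (ler_norm_sum _ _ _) _.
rewrite -sum_const_seq !big_seq; apply: ler_sum => x xs.
exact: pointwise (s0 x xs) he ht.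
Qed.


Hypothesis tail : forall e, 0 < e -> exists M, forall x, M <= x -> `|f x| <= e.

Lemma mean_cvg (s : nat -> seq R) : (forall n x, x \in s n -> 0 <= x) ->
  (forall m k, cvg (((count (fun x => x <= v m k) (s n))%:R / (size (s n))%:R : R) @[n --> \oo])) ->
  cvg (((\sum_(x <- s n) f x) / (size (s n))%:R : R) @[n --> \oo]).
Proof.
move=> s0 hc; apply: approx_cvg => e e0.
pose m := Num.trunc (2 * L / e).
have hm : 2 * L / m.+1%:R <= e.
  have h := truncnS_gt (2 * L / e); rewrite -/m ltr_pdivrMr // in h.
  rewrite ler_pdivrMr ?ltr0n //; lra.
have [M hM] := tail e0.
pose K := (Num.trunc (M * m.+1%:R)).+1.
have hK : forall y, v m K <= y -> `|f y| <= e.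
  move=> y hy; apply: hM; apply: le_trans hy; apply: ltW.
  have [h _] := hv m K; apply: lt_trans h.
  rewrite ltr_pdivlMr ?ltr0n //; exact: truncnS_gt.
exists (fun n => \sum_(j < K.+1) f (v m j) * ((count (bin m j) (s n))%:R / (size (s n))%:R)).
split; last by move=> n; exact: mean_bound (s0 n) hm hK.
apply: (@cvg_sum_ord R K.+1 (fun n (j : nat) => f (v m j) * ((count (bin m j) (s n))%:R / (size (s n))%:R))) => j.
under eq_fun do rewrite count_bin mulrBl.
apply: is_cvgM; first exact: is_cvg_cst.
apply: is_cvgB; first exact: hc.
case: j => [|j] /=; last exact: hc.
have H n : count (fun x => x <= -1) (s n) = 0%N.
  rewrite (@eq_in_count _ _ pred0) ?count_pred0 //.
  move=> x xs /=; apply/negbTE; rewrite -ltNge; apply: lt_le_trans (s0 n x xs); lra.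
under eq_fun => n do rewrite H mul0r.
exact: is_cvg_cst.
Qed.

End Core.

Lemma main_omega (R : realType) (d : nat -> nat) (y : R) (A : forall n, 'M[R]_(d n))
  (FS : R -> R) (v : nat -> nat -> R) (lam : R) :
  (forall n, psd (A n)) -> 0 < lam ->
  ((d n)%:R / n%:R : R) @[n --> \oo] --> y ->
  (forall m k, (k%:R / m.+1%:R < v m k) /\ (v m k < k.+1%:R / m.+1%:R)) ->
  (forall m k, esd (A n) (v m k) @[n --> \oo] --> FS (v m k)) ->
  cvg ((dlam (A n) lam / n%:R) @[n --> \oo]).
Proof.
move=> psdA lam0 hy hv hc.
have hs n := spec_decomp (psdA n).1 (psdA n).2.
pose s n := proj1_sig (cid (hs n)).
have Hs n : [/\ size (s n) = d n, char_poly (A n) = \prod_(x <- s n) ('X - x%:P),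
    (forall x, x \in s n -> 0 <= x) &
    forall lam, 0 < lam -> \tr (A n *m invmx (A n + lam%:M)) = \sum_(x <- s n) x / (x + lam)].
  exact: proj2_sig (cid (hs n)).
have esdE n u : esd (A n) u = (count (fun x => x <= u) (s n))%:R / (size (s n))%:R.
  by case: (Hs n) => sz ch _ _; rewrite /esd ch esd_count sz.
have s0 n x : x \in s n -> 0 <= x by case: (Hs n) => _ _ h _; exact: h.
pose f x := lam / (x + lam).
have mc : cvg (((\sum_(x <- s n) f x) / (size (s n))%:R : R) @[n --> \oo]).
  apply: (@mean_cvg R f lam^-1 _ _ v hv _ s s0).
  - by rewrite invr_gt0.
  - move=> x z x0 y0; rewrite /f.
    have a0 : 0 < x + lam by lra.
    have b0 : 0 < z + lam by lra.
    have -> : lam / (x + lam) - lam / (z + lam) = (z - x) * (lam / ((x + lam) * (z + lam))).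
      by field; apply/andP; split; rewrite gt_eqF.
    have q0 : 0 < (x + lam) * (z + lam) by apply: mulr_gt0.
    have hq : lam / ((x + lam) * (z + lam)) <= lam^-1.
      rewrite ler_pdivrMr //.
      apply: (@le_trans _ _ (lam^-1 * (lam * lam))).
        by rewrite mulrA mulVf ?mul1r // gt_eqF.
      apply: ler_wpM2l; [by rewrite invr_ge0 ltW | nra].
    rewrite normrM distrC [`|lam / _|]ger0_norm ?divr_ge0 ?(ltW lam0) ?(ltW q0) //.
    by rewrite mulrC; apply: ler_wpM2r.
  - move=> e e0; exists (lam / e) => x hx.
    have x0 : 0 < x by apply: lt_le_trans hx; rewrite divr_gt0.
    have a0 : 0 < x + lam by lra.
    rewrite /f ger0_norm ?divr_ge0 ?(ltW lam0) ?(ltW a0) // ler_pdivrMr //.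
    rewrite ler_pdivrMr // in hx; nra.
  - move=> m k; under eq_fun do rewrite -esdE; exact: cvgP (hc m k).
have eq n : dlam (A n) lam / n%:R =
    (d n)%:R / n%:R - ((\sum_(x <- s n) f x) / (size (s n))%:R) * ((d n)%:R / n%:R).
  case: (Hs n) => sz _ _ tr; rewrite /dlam tr //.
  have -> : \sum_(x <- s n) x / (x + lam) = (size (s n))%:R - \sum_(x <- s n) f x.
    rewrite -[(size _)%:R]mul1r -sum_const_seq -sumrB big_seq [RHS]big_seq.
    apply: eq_bigr => x xs; rewrite /f; have x0 := s0 n x xs.
    by field; rewrite gt_eqF //; lra.
  rewrite sz; case: (d n =P 0)%N => [d0|dn0].
    have sn : s n = [::] by apply/size0nil; rewrite sz.
    rewrite sn big_nil d0; ring.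
  by rewrite mulrA divfK ?mulrBl // pnatr_eq0; apply/eqP.
under eq_fun do rewrite eq.
apply: is_cvgB; first exact: cvgP hy.
by apply: is_cvgM => //; exact: cvgP hy.
Qed.

Theorem lemmaA2 (R : realType) (dO : measure_display) (Omega : measurableType dO)
  (P : probability Omega R)
  (d : nat -> nat) (y : R) (Sigma : forall n : nat, Omega -> 'M[R]_(d n))
  (FSigma : R -> R) :
  (forall n omega, psd (Sigma n omega)) ->
  (d n @[n --> \oo] --> \oo) ->
  0 <= y -> y < 1 ->
  ((d n)%:R / n%:R : R) @[n --> \oo] --> y ->
  distribution_function FSigma ->
  {ae (@lebesgue_measure R), forall u : R, 0 < u ->
     {ae P, forall omega, esd (Sigma n omega) u @[n --> \oo] --> FSigma u}} ->
  forall lam : R, 0 < lam ->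
    {ae P, forall omega, cvg ((dlam (Sigma n omega) lam / n%:R) @[n --> \oo])}.
Proof.
move=> psdS dinf y0 y1 hy hF Hleb lam lam0.
have [N [mN N0 sub]] := Hleb.
set Q := fun u => {ae P, forall omega, esd (Sigma n omega) u @[n --> \oo] --> FSigma u}.
have exv m k : exists u, (k%:R / m.+1%:R < u /\ u < k.+1%:R / m.+1%:R) /\ Q u.
  apply: contrapT => nex.
  pose a : R := k%:R / m.+1%:R; pose b : R := k.+1%:R / m.+1%:R.
  have a0 : 0 <= a by rewrite divr_ge0.
  have ab : a < b by rewrite ltr_pM2r ?invr_gt0 ?ltr0n // ltr_nat.
  have itvN : [set` `]a, b[] `<=` N.
    move=> u /=; rewrite in_itv /= => /andP[au ub]; apply: sub => /= hu.
    apply: nex; exists u; split => //; apply: hu; exact: le_lt_trans au.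
  have := @le_measure _ _ _ (@lebesgue_measure R) _ _ _ _ itvN.
  move=> h.
  have h1 : (lebesgue_measure [set` `]a, b[] <= 0)%E.
    rewrite -N0; apply: h; rewrite inE //; exact: measurable_itv.
  move: h1; rewrite lebesgue_measure_itv /= lte_fin ab lee_fin subr_le0 leNgt.
  by rewrite ab.
pose v m k := proj1_sig (cid (exv m k)).
have hv m k : (k%:R / m.+1%:R < v m k) /\ (v m k < k.+1%:R / m.+1%:R).
  exact: (proj2_sig (cid (exv m k))).1.
have hQ m k : Q (v m k) by exact: (proj2_sig (cid (exv m k))).2.
apply: (negligibleS _ (negligible_bigcup (fun m => negligible_bigcup (fun k => hQ m k)))).
move=> omega /= ncvg; apply: contrapT => nin; apply: ncvg.
apply: (@main_omega R d y (fun n => Sigma n omega) FSigma v lam) => //.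
move=> m k; apply: contrapT => nc; apply: nin; exists m => //; exists k => //.
Qed.
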